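(* Let $(S,\sqcup,\cap)$ be an ado-semilattice and $a,b,d\in S$. If $a$ and $b$ have an upper bound in $(S,\leq)$ and $d\lesssim a$ and $d\lesssim b$, then $d\lesssim a\cap b$.
   Context: An o-semilattice is an algebra $(L,\cap,\sqcup)$ such that $(L,\cap)$ is a semilattice and, with $x\leq y$ iff $x=x\cap y$, for all $x,y,z$: (i) $x\leq x\sqcup y$; (ii) $(x\cap y)\sqcup(y\cap z)\leq y$; (iii) $x\sqcup y\leq x\sqcup(y\cap(x\sqcup y))$; (iv) $x\cap z\leq(x\cap y)\sqcup z$. It is distributive if $(a\cap d)\sqcup((b\cap d)\cap(c\cap d))=((a\cap d)\sqcup(b\cap d))\cap((a\cap d)\sqcup(c\cap d))$ for all $a,b,c,d$. An ado-semilattice is a distributive o-semilattice in which $\sqcup$ is associative. Here $\leq$ is the semilattice order ($x\leq y$ iff $x=x\cap y$) and $x\lesssim y$ means $y\sqcup x=y$. *)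

(* Defs.v *)
Definition sle {L : Type} (cap : L -> L -> L) (x y : L) : Prop := x = cap x y.

Definition is_semilattice {L : Type} (cap : L -> L -> L) : Prop :=
  (forall x y z, cap x (cap y z) = cap (cap x y) z) /\
  (forall x y, cap x y = cap y x) /\
  (forall x, cap x x = x).

Definition is_o_semilattice {L : Type} (cap cup : L -> L -> L) : Prop :=
  is_semilattice cap /\
  (forall x y, sle cap x (cup x y)) /\
  (forall x y z, sle cap (cup (cap x y) (cap y z)) y) /\
  (forall x y, sle cap (cup x y) (cup x (cap y (cup x y)))) /\
  (forall x y z, sle cap (cap x z) (cup (cap x y) z)).

Definition is_distributive {L : Type} (cap cup : L -> L -> L) : Prop :=
  forall a b c d,
    cup (cap a d) (cap (cap b d) (cap c d)) =
    cap (cup (cap a d) (cap b d)) (cup (cap a d) (cap c d)).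

Definition is_ado_semilattice {L : Type} (cap cup : L -> L -> L) : Prop :=
  is_o_semilattice cap cup /\ is_distributive cap cup /\
  (forall x y z, cup x (cup y z) = cup (cup x y) z).

Definition slesssim {L : Type} (cup : L -> L -> L) (x y : L) : Prop := cup y x = y.

(* Main.v *)
Require Import Defs.
From Stdlib Require Import Setoid.

Section S.
Variable S : Type.
Variables cap cup : S -> S -> S.
Hypothesis cA : forall x y z, cap x (cap y z) = cap (cap x y) z.
Hypothesis cC : forall x y, cap x y = cap y x.
Hypothesis cI : forall x, cap x x = x.
Hypothesis H1 : forall x y, sle cap x (cup x y).
Hypothesis H2 : forall x y z, sle cap (cup (cap x y) (cap y z)) y.
Hypothesis H3 : forall x y, sle cap (cup x y) (cup x (cap y (cup x y))).
Hypothesis H4 : forall x y z, sle cap (cap x z) (cup (cap x y) z).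
Hypothesis D : forall a b c d,
    cup (cap a d) (cap (cap b d) (cap c d)) =
    cap (cup (cap a d) (cap b d)) (cup (cap a d) (cap c d)).
Hypothesis jA : forall x y z, cup x (cup y z) = cup (cup x y) z.

Lemma antis x y : sle cap x y -> sle cap y x -> x = y.
Proof. unfold sle; intros h1 h2. rewrite h1, cC, <- h2. reflexivity. Qed.

Lemma letr x y z : sle cap x y -> sle cap y z -> sle cap x z.
Proof. unfold sle; intros h1 h2. rewrite h1 at 1. rewrite h2 at 1.
  rewrite cA, <- h1. reflexivity. Qed.

Lemma capl x y : sle cap (cap x y) x.
Proof. unfold sle. rewrite (cC (cap x y) x), cA, cI. reflexivity. Qed.

Lemma glb z x y : sle cap z x -> sle cap z y -> sle cap z (cap x y).
Proof. unfold sle; intros h1 h2. rewrite cA, <- h1. exact h2. Qed.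

Lemma absA x y : sle cap y x -> cup x y = x.
Proof. intro h. apply antis; [| apply H1].
  pose proof (H2 x x y) as e. rewrite cI in e.
  assert (cap x y = y) as E. { rewrite cC. symmetry. exact h. }
  rewrite E in e. exact e. Qed.

Lemma absB x y : sle cap x y -> cup x y = y.
Proof. intro h. assert (cap y x = x) as E. { rewrite cC. symmetry. exact h. }
  apply antis.
  - pose proof (H2 x y y) as e. rewrite cI in e. rewrite <- h in e. exact e.
  - pose proof (H4 y x y) as e. rewrite cI, E in e. exact e. Qed.

Lemma Elem x y : cup x y = cup x (cap y (cup x y)).
Proof. apply antis; [apply H3|].
  pose proof (H2 x (cup x y) (cap y (cup x y))) as e.
  rewrite <- (H1 x y) in e.
  assert (cap (cup x y) (cap y (cup x y)) = cap y (cup x y)) as E.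
  { rewrite cC, <- cA, cI. reflexivity. }
  rewrite E in e. exact e. Qed.

Lemma joinle u x y : sle cap x u -> sle cap y u -> sle cap (cup x y) (cup y x).
Proof. intros hx hy.
  assert (sle cap x (cup y x)) as Hx.
  { pose proof (H4 u y x) as e.
    assert (cap u x = x) as E1 by (rewrite cC; symmetry; exact hx).
    assert (cap u y = y) as E2 by (rewrite cC; symmetry; exact hy).
    rewrite E1, E2 in e. exact e. }
  pose proof (H2 x (cup y x) y) as e.
  rewrite <- Hx in e.
  assert (cap (cup y x) y = y) as E. { rewrite cC. symmetry. apply H1. }
  rewrite E in e. exact e. Qed.

Lemma joinbound u x y : sle cap x u -> sle cap y u -> sle cap (cup x y) u.
Proof. intros hx hy. pose proof (H2 x u y) as e.
  rewrite <- hx in e. assert (cap u y = y) as E2 by (rewrite cC; symmetry; exact hy).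
  rewrite E2 in e. exact e. Qed.

Lemma main a b d u : sle cap a u -> sle cap b u ->
  cup a d = a -> cup b d = b -> cup (cap a b) d = cap a b.
Proof. intros hau hbu hda hdb.
  set (c := cap a b). set (w := cup c d). set (z := cup w u).
  assert (hca : sle cap c a) by apply capl.
  assert (hcb : sle cap c b) by (unfold c; rewrite cC; apply capl).
  assert (haw : cup a w = a) by (unfold w; rewrite jA, (absA a c hca); exact hda).
  assert (hbw : cup b w = b) by (unfold w; rewrite jA, (absA b c hcb); exact hdb).
  assert (hcu : sle cap c u) by (apply letr with a; assumption).
  assert (hud : cup u d = u).
  { transitivity (cup u (cup a d)).
    - rewrite jA, (absA u a hau). reflexivity.
    - rewrite hda. apply absA. exact hau. }
  assert (huw : cup u w = u) by (unfold w; rewrite jA, (absA u c hcu); exact hud).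
  assert (huz : cup u z = u) by (unfold z; rewrite jA, huw, (absA u u); [reflexivity| unfold sle; rewrite cI; reflexivity]).
  assert (haz : cup a z = u) by (unfold z; rewrite jA, haw, (absB a u hau); reflexivity).
  assert (hbz : cup b z = u) by (unfold z; rewrite jA, hbw, (absB b u hbu); reflexivity).
  set (m := cap z u).
  assert (ham : cup a m = u) by (unfold m; rewrite <- haz at 1; rewrite <- Elem; exact haz).
  assert (hbm : cup b m = u) by (unfold m; rewrite <- hbz at 1; rewrite <- Elem; exact hbz).
  assert (hmu : sle cap m u) by (unfold m; rewrite cC; apply capl).
  assert (hcw : sle cap c w) by apply H1.
  assert (hwz : sle cap w z) by apply H1.
  assert (hcm : sle cap c m) by (apply glb; [apply letr with w|]; assumption).
  assert (hma : cup m a = u).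
  { apply antis; [apply joinbound; assumption|]. rewrite <- ham at 1. apply (joinle u); assumption. }
  assert (hmb : cup m b = u).
  { apply antis; [apply joinbound; assumption|]. rewrite <- hbm at 1. apply (joinle u); assumption. }
  assert (hmeq : m = u).
  { pose proof (D m a b u) as e.
    assert (Em : cap m u = m) by (symmetry; exact hmu).
    assert (Ea : cap a u = a) by (symmetry; exact hau).
    assert (Eb : cap b u = b) by (symmetry; exact hbu).
    rewrite Em, Ea, Eb, hma, hmb, cI in e. fold c in e. rewrite (absA m c hcm) in e. exact e. }
  assert (huz2 : sle cap u z) by (unfold sle; rewrite cC; fold m; symmetry; exact hmeq).
  assert (hzu : z = u) by (rewrite <- (absB u z huz2); exact huz).
  assert (hwu : sle cap w u) by (rewrite <- hzu; exact hwz).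
  assert (hwa : sle cap w a).
  { pose proof (H4 u a w) as e.
    assert (cap u w = w) as E1 by (rewrite cC; symmetry; exact hwu).
    assert (cap u a = a) as E2 by (rewrite cC; symmetry; exact hau).
    rewrite E1, E2, haw in e. exact e. }
  assert (hwb : sle cap w b).
  { pose proof (H4 u b w) as e.
    assert (cap u w = w) as E1 by (rewrite cC; symmetry; exact hwu).
    assert (cap u b = b) as E2 by (rewrite cC; symmetry; exact hbu).
    rewrite E1, E2, hbw in e. exact e. }
  apply antis; [apply glb; assumption | exact hcw].
Qed.
End S.

Theorem lemma3p5 (S : Type) (cap cup : S -> S -> S)
  (Hado : is_ado_semilattice cap cup) (a b d : S)
  (Hub : exists u, sle cap a u /\ sle cap b u)
  (Hda : slesssim cup d a) (Hdb : slesssim cup d b) :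
  slesssim cup d (cap a b).
Proof.
  destruct Hado as [[[cA [cC cI]] [H1 [H2 [H3 H4]]]] [D jA]].
  destruct Hub as [u [hau hbu]].
  unfold slesssim in *.
  exact (main S cap cup cA cC cI H1 H2 H3 H4 D jA a b d u hau hbu Hda Hdb).
Qed.
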